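(* Let $A$ be a synaptic algebra, $p,q\in P$, $r:=(p\vee q)\wedge(p\vee q^{\perp})\wedge(p^{\perp}\vee q)\wedge(p^{\perp}\vee q^{\perp})$, $r_p:=p\wedge(p^{\perp}\vee q)\wedge(p^{\perp}\vee q^{\perp})$ and $r_q:=q\wedge(p\vee q^{\perp})\wedge(p^{\perp}\vee q^{\perp})$. Then $r_p=pr=rp=r\wedge p$ and $r_q=qr=rq=r\wedge q$ belong to $P[0,r]$, and $r_p$ and $r_q$ are in generic position in the synaptic algebra $rAr$; that is, $r_p\wedge r_q=r_p\wedge(r-r_q)=(r-r_p)\wedge r_q=(r-r_p)\wedge(r-r_q)=0$.
   Context: Synaptic algebra (Foulis): $R$ is a real linear associative algebra with unit $1$, and $A\subseteq R$ is a real linear subspace with $1\in A$. For $a,b\in A$ write $aCb$ iff $ab=ba$; $C(a):=\{b\in A: aCb\}$; $CC(a):=\{b\in A: bCd \text{ for all } d\in C(a)\}$. $A$ is a synaptic algebra with enveloping algebra $R$ iff: (SA1) $A$ is a partially ordered archimedean real linear space with positive cone $A^+$, $1$ is an order unit, $\|\cdot\|$ the order-unit norm; (SA2) $a\in A\Rightarrow a^2\in A^+$; (SA3) $a,b\in A^+\Rightarrow aba\in A^+$; (SA4) if $a\in A$, $b\in A^+$, $aba=0$ then $ab=ba=0$; (SA5) if $a\in A^+$ there is $b\in A^+\cap CC(a)$ with $b^2=a$; (SA6) for $a\in A$ there is $p=p^2\in A$ with $ab=0\Leftrightarrow pb=0$ for all $b\in A$; (SA7) if $1\le a$ there is $b\in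 A$ with $ab=ba=1$; (SA8) if $a,b\in A$, $a_1\le a_2\le\cdots$ are pairwise commuting elements of $C(b)$ with $\|a-a_n\|\to0$, then $a\in C(b)$. $A$ is nondegenerate. $P:=\{p\in A:p=p^2\}$ with the inherited order is an orthomodular lattice with $p^{\perp}:=1-p$, meet $\wedge$, join $\vee$. For $r\in P$, $rAr:=\{rar:a\in A\}=\{b\in A:b=br=rb\}$ is a synaptic algebra with unit $r$ (enveloping algebra $rRr$), whose projection lattice is $P[0,r]:=\{x\in P:x\le r\}$ with orthocomplement $x\mapsto r-x=x^{\perp}\wedge r$. Two projections $x,y$ of a synaptic algebra are in generic position iff $x\wedge y=x\wedge y'=x'\wedge y=x'\wedge y'=0$, where $'$ is the orthocomplement of that algebra. *)

(* Defs.v *)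
From HB Require Import structures.
From mathcomp Require Import all_boot all_order all_algebra.
From mathcomp Require Import boolp classical_sets reals.
From Stdlib Require Import ClassicalEpsilon.
Set Implicit Arguments. Unset Strict Implicit. Unset Printing Implicit Defensive.
Import Order.TTheory GRing.Theory Num.Theory.
Local Open Scope ring_scope.
Local Open Scope classical_set_scope.

Section Synaptic.
Variables (R : realType) (E : algType R).
(* A : the synaptic algebra (a subset of the enveloping algebra E);
   Pos : its positive cone A^+. *)
Variables (A Pos : {pred E}).

Definition sle (x y : E) : Prop := (y - x) \in Pos.

Definition scomm (a b : E) : Prop := a * b = b * a.
Definition C_ (a : E) : E -> Prop := fun b => b \in A /\ scomm a b.
Definition CC_ (a : E) : E -> Prop :=
  fun b => b \in A /\ forall d, C_ a d -> scomm b d.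

Definition ounorm (a : E) : R :=
  inf [set l : R | 0 <= l /\ sle (- (l *: 1)) a /\ sle a (l *: 1)].

Record synaptic : Prop := {
  sa_0 : (0 : E) \in A;
  sa_add : forall a b, a \in A -> b \in A -> a + b \in A;
  sa_scale : forall (k : R) a, a \in A -> k *: a \in A;
  sa_1 : (1 : E) \in A;
  sa_pos_sub : forall a, a \in Pos -> a \in A;
  sa_pos_add : forall a b, a \in Pos -> b \in Pos -> a + b \in Pos;
  sa_pos_scale : forall (k : R) a, 0 <= k -> a \in Pos -> k *: a \in Pos;
  sa_pos_anti : forall a, a \in Pos -> - a \in Pos -> a = 0;
  sa_archimedean : forall a b, a \in A -> b \in A ->
      (forall n : nat, sle (n%:R *: a) b) -> sle a 0;
  sa_order_unit : forall a, a \in A -> exists n : nat, sle a (n%:R *: 1);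
  sa2 : forall a, a \in A -> a * a \in Pos;
  sa3 : forall a b, a \in Pos -> b \in Pos -> a * b * a \in Pos;
  sa4 : forall a b, a \in A -> b \in Pos -> a * b * a = 0 ->
      a * b = 0 /\ b * a = 0;
  sa5 : forall a, a \in Pos -> exists b, b \in Pos /\ CC_ a b /\ b * b = a;
  sa6 : forall a, a \in A -> exists p, p \in A /\ p * p = p /\
      (forall b, b \in A -> (a * b = 0 <-> p * b = 0));
  sa7 : forall a, a \in A -> sle 1 a -> exists b, b \in A /\ a * b = 1 /\ b * a = 1;
  sa8 : forall (a b : E) (u : nat -> E), a \in A -> b \in A ->
      (forall n, C_ b (u n)) ->
      (forall m n, scomm (u m) (u n)) ->
      (forall n, sle (u n) (u n.+1)) ->
      (forall e : R, 0 < e -> exists N : nat, forall n, (N <= n)%N -> ounorm (a - u n) < e) ->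
      C_ b a;
  sa_nondeg : (1 : E) != 0
}.

Definition proj (p : E) : Prop := p \in A /\ p * p = p.
Definition pcompl (p : E) : E := 1 - p.

Definition is_glb (S : E -> Prop) (x y m : E) : Prop :=
  S m /\ sle m x /\ sle m y /\ forall z, S z -> sle z x -> sle z y -> sle z m.
Definition is_lub (S : E -> Prop) (x y m : E) : Prop :=
  S m /\ sle x m /\ sle y m /\ forall z, S z -> sle x z -> sle y z -> sle m z.

Definition meet_in (S : E -> Prop) (x y : E) : E := epsilon (inhabits 0) (is_glb S x y).
Definition join_in (S : E -> Prop) (x y : E) : E := epsilon (inhabits 0) (is_lub S x y).

Definition pmeet := meet_in proj.
Definition pjoin := join_in proj.

Definition Pint (r : E) : E -> Prop := fun x => proj x /\ sle x r.

(* generic position in rAr (meets in P[0,r], orthocomplement x |-> r - x) *)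
Definition generic_in (r x y : E) : Prop :=
  meet_in (Pint r) x y = 0 /\ meet_in (Pint r) x (r - y) = 0 /\
  meet_in (Pint r) (r - x) y = 0 /\ meet_in (Pint r) (r - x) (r - y) = 0.

End Synaptic.

(* Main.v *)
Require Import Defs.
From HB Require Import structures.
From mathcomp Require Import all_boot all_order all_algebra.
From mathcomp Require Import boolp classical_sets reals.
From Stdlib Require Import ClassicalEpsilon.
Set Implicit Arguments. Unset Strict Implicit.
Import GRing.Theory Num.Theory.
Local Open Scope ring_scope.

Section S.
Variables (R : realType) (E : algType R) (A Pos : {pred E}).
Hypothesis HA : synaptic A Pos.

Local Notation prj := (proj A).
Local Notation le x y := (x * y = x).

Lemma inA_opp a : a \in A -> - a \in A.
Proof. move=> Ha; rewrite -scaleN1r; exact: (sa_scale HA). Qed.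
Lemma inA_sub a b : a \in A -> b \in A -> a - b \in A.
Proof. move=> Ha Hb; apply: (sa_add HA) => //; exact: inA_opp. Qed.
Lemma inA_add a b : a \in A -> b \in A -> a + b \in A.
Proof. exact: (sa_add HA). Qed.
Lemma inA1 : (1:E) \in A. Proof. exact: (sa_1 HA). Qed.

Lemma prjC x : prj x -> prj (1 - x).
Proof.
case=> Ha Hx; split; first by apply: inA_sub => //; exact: inA1.
by rewrite mulrBl mul1r mulrBr mulr1 Hx subrr subr0.
Qed.

Lemma prjCC x : 1 - (1 - x) = x :> E.
Proof. by rewrite opprB addrC subrK. Qed.

Lemma prj_pos x : prj x -> x \in Pos.
Proof. by case=> Ha Hx; rewrite -Hx; apply: (sa2 HA). Qed.

Lemma prj0 : prj 0.
Proof. by split; [exact: (sa_0 HA)|rewrite mulr0]. Qed.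

Lemma sle_anti (a b : E) : sle Pos a b -> sle Pos b a -> a = b.
Proof.
rewrite /sle => H1 H2.
have := sa_pos_anti HA H1; rewrite opprB => /(_ H2) /eqP.
by rewrite subr_eq0 => /eqP.
Qed.

Lemma mul1B0 (x y : E) : x * (1 - y) = 0 -> x * y = x.
Proof. by rewrite mulrBr mulr1 => /eqP; rewrite subr_eq0 => /eqP <-. Qed.
Lemma mul1B0l (x y : E) : (1 - y) * x = 0 -> y * x = x.
Proof. by rewrite mulrBl mul1r => /eqP; rewrite subr_eq0 => /eqP <-. Qed.

Lemma le_sym x y : prj x -> prj y -> x * y = x -> y * x = x.
Proof.
move=> px py Hxy; apply: mul1B0l.
have Hpos := prj_pos px; have [HA1 _] := prjC py.
have H0 : (1 - y) * x * (1 - y) = 0.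
  by rewrite -mulrA mulrBr mulr1 Hxy subrr mulr0.
by case: (sa4 HA HA1 Hpos H0).
Qed.

Lemma le_sym' x y : prj x -> prj y -> y * x = x -> x * y = x.
Proof.
move=> px py Hxy; apply: mul1B0.
have Hpos := prj_pos px; have [HA1 _] := prjC py.
have H0 : (1 - y) * x * (1 - y) = 0.
  by rewrite mulrBl mul1r Hxy subrr mul0r.
by case: (sa4 HA HA1 Hpos H0).
Qed.

Lemma sleP x y : prj x -> prj y -> (sle Pos x y <-> x * y = x).
Proof.
move=> px py; split.
- rewrite /sle => H.
  have [HA1 Hy1] := prjC py.
  have H1 : (1 - y) * (y - x) * (1 - y) = - ((1 - y) * x * (1 - y)).
    have Hy : (1 - y) * y = 0 by rewrite mulrBl mul1r py.2 subrr.
    by rewrite [X in X * _ = _]mulrBr Hy sub0r mulNr.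
  have Hp1 : (1 - y) * (y - x) * (1 - y) \in Pos.
    by apply: (sa3 HA) => //; exact: prj_pos (prjC py).
  have Hp2 : (1 - y) * x * (1 - y) \in Pos.
    by apply: (sa3 HA); [exact: prj_pos (prjC py)|exact: prj_pos].
  rewrite H1 in Hp1.
  have H0 := sa_pos_anti HA Hp2 Hp1.
  case: (sa4 HA HA1 (prj_pos px) H0) => _; exact: mul1B0.
- move=> H; rewrite /sle.
  have Hyx := le_sym px py H.
  apply: prj_pos; split; first by apply: inA_sub; [case: py|case: px].
  rewrite mulrBl !mulrBr py.2 px.2 Hyx H.
  by rewrite subrr subr0.
Qed.


Lemma le_trans (a b c : E) : le a b -> le b c -> le a c.
Proof. by move=> H1 H2; rewrite -{1}H1 -mulrA H2 H1. Qed.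

Lemma comp_rev x y : prj x -> prj y -> le x y -> le (1 - y) (1 - x).
Proof.
move=> px py H; have Hyx := le_sym px py H.
by rewrite mulrBl mul1r mulrBr mulr1 Hyx opprB subrKA.
Qed.

Lemma comp_rev' x y : prj x -> prj y -> le (1 - y) (1 - x) -> le x y.
Proof.
move=> px py H; have := comp_rev (prjC py) (prjC px) H.
by rewrite !prjCC.
Qed.

Definition glbS (S : E -> Prop) x y m :=
  S m /\ le m x /\ le m y /\ forall z, S z -> le z x -> le z y -> le z m.
Definition lubS (S : E -> Prop) x y m :=
  S m /\ le x m /\ le y m /\ forall z, S z -> le x z -> le y z -> le m z.

Section SS.
Variable S : E -> Prop.
Hypothesis HS : forall z, S z -> prj z.

Lemma glb_conv x y m : prj x -> prj y ->
  (is_glb Pos S x y m <-> glbS S x y m).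
Proof.
move=> px py; split.
- case=> Sm [H1 [H2 H3]]; have pm := HS Sm.
  split=> //; split; first by apply/(sleP pm px).
  split; first by apply/(sleP pm py).
  move=> z Sz Hx Hy; have pz := HS Sz; apply/(sleP pz pm).
  by apply: H3 => //; [apply/(sleP pz px)|apply/(sleP pz py)].
- case=> Sm [H1 [H2 H3]]; have pm := HS Sm.
  split=> //; split; first by apply/(sleP pm px).
  split; first by apply/(sleP pm py).
  move=> z Sz Hx Hy; have pz := HS Sz; apply/(sleP pz pm).
  by apply: H3 => //; [apply/(sleP pz px)|apply/(sleP pz py)].
Qed.

Lemma lub_conv x y m : prj x -> prj y ->
  (is_lub Pos S x y m <-> lubS S x y m).
Proof.
move=> px py; split.
- case=> Sm [H1 [H2 H3]]; have pm := HS Sm.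
  split=> //; split; first by apply/(sleP px pm).
  split; first by apply/(sleP py pm).
  move=> z Sz Hx Hy; have pz := HS Sz; apply/(sleP pm pz).
  by apply: H3 => //; [apply/(sleP px pz)|apply/(sleP py pz)].
- case=> Sm [H1 [H2 H3]]; have pm := HS Sm.
  split=> //; split; first by apply/(sleP px pm).
  split; first by apply/(sleP py pm).
  move=> z Sz Hx Hy; have pz := HS Sz; apply/(sleP pm pz).
  by apply: H3 => //; [apply/(sleP px pz)|apply/(sleP py pz)].
Qed.

Lemma le_antiP a b : prj a -> prj b -> le a b -> le b a -> a = b.
Proof. by move=> pa pb H1 H2; rewrite -H1 (le_sym pb pa H2). Qed.

Lemma meet_eqS x y m : prj x -> prj y -> glbS S x y m -> meet_in Pos S x y = m.
Proof.
move=> px py Hm.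
have Hex : exists m, is_glb Pos S x y m by exists m; apply/glb_conv.
have := epsilon_spec (inhabits 0) _ Hex.
rewrite -/(meet_in Pos S x y) => /(glb_conv _ px py) Hm'.
case: Hm => Sm [H1 [H2 H3]]; case: Hm' => Sm' [H1' [H2' H3']].
apply: le_antiP; [exact: HS|exact: HS|exact: H3|exact: H3'].
Qed.

Lemma join_eqS x y m : prj x -> prj y -> lubS S x y m -> join_in Pos S x y = m.
Proof.
move=> px py Hm.
have Hex : exists m, is_lub Pos S x y m by exists m; apply/lub_conv.
have := epsilon_spec (inhabits 0) _ Hex.
rewrite -/(join_in Pos S x y) => /(lub_conv _ px py) Hm'.
case: Hm => Sm [H1 [H2 H3]]; case: Hm' => Sm' [H1' [H2' H3']].
apply: le_antiP; [exact: HS|exact: HS|exact: H3'|exact: H3].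
Qed.
End SS.


Lemma sum_pos0 (a b : E) : a \in Pos -> b \in Pos -> a + b = 0 -> a = 0.
Proof.
move=> Ha Hb /eqP; rewrite addr_eq0 => /eqP Hab.
have Hb' : - b \in Pos by rewrite -Hab.
have Hb0 := sa_pos_anti HA Hb Hb'.
by rewrite Hab Hb0 oppr0.
Qed.

Lemma lub_ex x y : prj x -> prj y -> exists c, lubS prj x y c.
Proof.
move=> px py.
have xyA : x + y \in A by apply: inA_add; [case: px|case: py].
case: (sa6 HA xyA) => c [cA [cc Hc]].
have pc : prj c by [].
have [uA uu] := prjC pc.
have H0 : (x + y) * (1 - c) = 0.
  by apply/(Hc _ uA); rewrite mulrBr mulr1 cc subrr.
have Hsum : (1 - c) * x * (1 - c) + (1 - c) * y * (1 - c) = 0.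
  by rewrite -mulrDl -mulrDr -mulrA H0 mulr0.
have Pu := prj_pos (prjC pc).
have Hx0 := sum_pos0 (sa3 HA Pu (prj_pos px)) (sa3 HA Pu (prj_pos py)) Hsum.
have Hy0 : (1 - c) * y * (1 - c) = 0.
  by move: Hsum; rewrite Hx0 add0r.
exists c; split=> //; split.
  by case: (sa4 HA uA (prj_pos px) Hx0) => _; exact: mul1B0.
split.
  by case: (sa4 HA uA (prj_pos py) Hy0) => _; exact: mul1B0.
move=> z pz Hxz Hyz; apply: mul1B0; apply/(Hc _ (prjC pz).1).
by rewrite mulrDl !mulrBr !mulr1 Hxz Hyz !subrr addr0.
Qed.

Lemma glb_ex x y : prj x -> prj y -> exists m, glbS prj x y m.
Proof.
move=> px py.
case: (lub_ex (prjC px) (prjC py)) => c [pc [H1 [H2 H3]]].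
exists (1 - c); split; first exact: prjC.
split; first by have := comp_rev (prjC px) pc H1; rewrite prjCC.
split; first by have := comp_rev (prjC py) pc H2; rewrite prjCC.
move=> z pz Hx Hy.
have := H3 _ (prjC pz) (comp_rev pz px Hx) (comp_rev pz py Hy).
by move/(comp_rev pc (prjC pz)); rewrite prjCC.
Qed.

Lemma pmeet_spec x y : prj x -> prj y -> glbS prj x y (pmeet A Pos x y).
Proof.
move=> px py; case: (glb_ex px py) => m Hm.
by rewrite /pmeet (meet_eqS (fun z (h : prj z) => h) px py Hm).
Qed.

Lemma pmeet_eq x y m : prj x -> prj y -> glbS prj x y m -> pmeet A Pos x y = m.
Proof. by move=> px py Hm; rewrite /pmeet (meet_eqS (fun z (h : prj z) => h) px py Hm). Qed.

Lemma prj_meet x y : prj x -> prj y -> prj (pmeet A Pos x y).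
Proof. by move=> px py; case: (pmeet_spec px py). Qed.

Lemma join_compl x y : prj x -> prj y ->
  pjoin A Pos x y = 1 - pmeet A Pos (1 - x) (1 - y).
Proof.
move=> px py.
have [pm [H1 [H2 H3]]] := pmeet_spec (prjC px) (prjC py).
rewrite /pjoin (join_eqS (m := 1 - pmeet A Pos (1 - x) (1 - y)) (fun z (h : prj z) => h) px py) //.
split; first exact: prjC.
split; first by have := comp_rev pm (prjC px) H1; rewrite prjCC.
split; first by have := comp_rev pm (prjC py) H2; rewrite prjCC.
move=> z pz Hx Hy.
have := H3 _ (prjC pz) (comp_rev px pz Hx) (comp_rev py pz Hy).
by move/(comp_rev (prjC pz) pm); rewrite prjCC.
Qed.

Lemma glb_comm (S : E -> Prop) x y : S (x * y) -> prj x -> prj y -> x * y = y * x ->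
  glbS S x y (x * y).
Proof.
move=> Sxy px py Hc; split=> //; split.
  by rewrite -mulrA -Hc mulrA px.2.
split; first by rewrite -mulrA py.2.
by move=> z _ Hx Hy; rewrite mulrA Hx Hy.
Qed.

Lemma prj_comm x y : prj x -> prj y -> x * y = y * x -> x * y \in A -> prj (x * y).
Proof.
move=> px py Hc HxyA; split=> //.
by rewrite mulrA -(mulrA x y x) -Hc mulrA px.2 -mulrA py.2.
Qed.

Lemma meet_comm x y : prj x -> prj y -> x * y = y * x -> x * y \in A ->
  pmeet A Pos x y = x * y.
Proof.
move=> px py Hc HA'; apply: pmeet_eq => //.
by apply: glb_comm => //; exact: prj_comm.
Qed.


Lemma le_compl0 a y : prj a -> prj y -> le y (1 - a) -> a * y = 0 /\ y * a = 0.
Proof.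
move=> pa py H; have H' := le_sym py (prjC pa) H.
split.
  by move: H'; rewrite mulrBl mul1r => /eqP; rewrite subr_eq addrC -subr_eq subrr eq_sym => /eqP.
by move: H; rewrite mulrBr mulr1 => /eqP; rewrite subr_eq addrC -subr_eq subrr eq_sym => /eqP.
Qed.

Lemma orth a x y : prj a -> prj x -> prj y -> le x a -> le y (1 - a) ->
  x * y = 0 /\ y * x = 0.
Proof.
move=> pa px py Hx Hy; have [H1 H2] := le_compl0 pa py Hy.
have Hx' := le_sym px pa Hx.
split; first by rewrite -Hx -mulrA H1 mulr0.
by rewrite -Hx' mulrA H2 mul0r.
Qed.

Lemma prj_add x y : prj x -> prj y -> x * y = 0 -> y * x = 0 -> prj (x + y).
Proof.
move=> px py H1 H2; split; first by apply: inA_add; [case: px|case: py].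
by rewrite mulrDl !mulrDr px.2 py.2 H1 H2 addr0 add0r.
Qed.

Lemma meet_cc x y : prj x -> prj y -> x * y = 0 -> y * x = 0 ->
  pmeet A Pos (1 - x) (1 - y) = 1 - (x + y).
Proof.
move=> px py H1 H2.
have E1 : (1 - x) * (1 - y) = 1 - (x + y).
  by rewrite mulrBl mul1r mulrBr mulr1 H1 subr0 opprD addrA addrAC.
have E2 : (1 - y) * (1 - x) = 1 - (x + y).
  by rewrite mulrBl mul1r mulrBr mulr1 H2 subr0 opprD addrA.
rewrite meet_comm ?E1 ?E2 //; try exact: prjC.
by apply: inA_sub; [exact: inA1|apply: inA_add; [case: px|case: py]].
Qed.

Lemma meet_sub a x : prj a -> prj x -> le x a -> pmeet A Pos a (1 - x) = a - x.
Proof.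
move=> pa px H; have H' := le_sym px pa H.
have E1 : a * (1 - x) = a - x by rewrite mulrBr mulr1 H'.
have E2 : (1 - x) * a = a - x by rewrite mulrBl mul1r H.
rewrite meet_comm ?E1 ?E2 //; first exact: prjC.
by apply: inA_sub; [case: pa|case: px].
Qed.

Lemma zero_case r a b z : prj r -> prj a -> prj b -> a * r = r * a ->
  b * r = r * b -> r * pmeet A Pos a b = 0 -> prj z -> le z r ->
  le z (a * r) -> le z (b * r) -> z = 0.
Proof.
move=> pr pa pb Ha Hb Hre pz Hzr Hza Hzb.
have Ga : le z a.
  by rewrite -{1}Hza -!mulrA -Ha (mulrA a a r) pa.2 Hza.
have Gb : le z b.
  by rewrite -{1}Hzb -!mulrA -Hb (mulrA b b r) pb.2 Hzb.
have [_ [_ [_ H3]]] := pmeet_spec pa pb.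
have He := H3 _ pz Ga Gb.
by rewrite -He -Hzr -mulrA Hre mulr0.
Qed.

Lemma gen_meet r a b : prj r -> prj a -> prj b -> a * r = r * a ->
  b * r = r * b -> a * r \in A -> b * r \in A -> r * pmeet A Pos a b = 0 ->
  meet_in Pos (Pint A Pos r) (a * r) (b * r) = 0.
Proof.
move=> pr pa pb Ha Hb HaA HbA Hre.
have par := prj_comm pa pr Ha HaA.
have pbr := prj_comm pb pr Hb HbA.
apply: meet_eqS => //; first by move=> z [].
split; first by split; [exact: prj0|apply/(sleP prj0 pr); rewrite mul0r].
split; first by rewrite mul0r.
split; first by rewrite mul0r.
move=> z [pz Hz] Hza Hzb; rewrite mulr0; apply/esym.
apply: (zero_case pr pa pb Ha Hb Hre pz) => //.
exact/(sleP pz pr).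
Qed.


Lemma main (p q : E) (hp : prj p) (hq : prj q) :
  let meet := pmeet A Pos in
  let join := pjoin A Pos in
  let r := meet (meet (meet (join p q) (join p (pcompl q)))
                      (join (pcompl p) q)) (join (pcompl p) (pcompl q)) in
  let rp := meet (meet p (join (pcompl p) q)) (join (pcompl p) (pcompl q)) in
  let rq := meet (meet q (join p (pcompl q))) (join (pcompl p) (pcompl q)) in
  (rp = p * r /\ p * r = r * p /\ r * p = meet r p) /\
  (rq = q * r /\ q * r = r * q /\ r * q = meet r q) /\
  (Pint A Pos r rp /\ Pint A Pos r rq) /\
  generic_in A Pos r rp rq.
Proof.
move=> meet join r rp rq.
have p' := prjC hp; have q' := prjC hq.
set e1 := pmeet A Pos p q.
set e2 := pmeet A Pos p (1 - q).
set e3 := pmeet A Pos (1 - p) q.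
set e4 := pmeet A Pos (1 - p) (1 - q).
have [pe1 [e1p [e1q _]]] := pmeet_spec hp hq.
have [pe2 [e2p [e2q _]]] := pmeet_spec hp q'.
have [pe3 [e3p [e3q _]]] := pmeet_spec p' hq.
have [pe4 [e4p [e4q _]]] := pmeet_spec p' q'.
have J1 : join p q = 1 - e4 by rewrite /join join_compl.
have J2 : join p (pcompl q) = 1 - e3 by rewrite /join /pcompl join_compl // prjCC.
have J3 : join (pcompl p) q = 1 - e2 by rewrite /join /pcompl join_compl // prjCC.
have J4 : join (pcompl p) (pcompl q) = 1 - e1 by rewrite /join /pcompl join_compl // !prjCC.
have [p_e4 e4_p] := le_compl0 hp pe4 e4p.
have [q_e4 e4_q] := le_compl0 hq pe4 e4q.
have [p_e3 e3_p] := le_compl0 hp pe3 e3p.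
have [q_e2 e2_q] := le_compl0 hq pe2 e2q.
have e1_p := e1p. have p_e1 := le_sym pe1 hp e1p.
have e1_q := e1q. have q_e1 := le_sym pe1 hq e1q.
have e2_p := e2p. have p_e2 := le_sym pe2 hp e2p.
have e3_q := e3q. have q_e3 := le_sym pe3 hq e3q.
have [o12 o21] := orth hq pe1 pe2 e1q e2q.
have [o13 o31] := orth hp pe1 pe3 e1p e3p.
have [o14 o41] := orth hp pe1 pe4 e1p e4p.
have [o23 o32] := orth hp pe2 pe3 e2p e3p.
have [o24 o42] := orth hp pe2 pe4 e2p e4p.
have [o34 o43] := orth hq pe3 pe4 e3q e4q.
have ps1 := prj_add pe4 pe3 o43 o34.
have ps2 : prj (e4 + e3 + e2).
  apply: prj_add => //; first by rewrite mulrDl o42 o32 addr0.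
  by rewrite mulrDr o24 o23 addr0.
have ps : prj (e4 + e3 + e2 + e1).
  apply: prj_add => //; first by rewrite !mulrDl o41 o31 o21 !addr0.
  by rewrite !mulrDr o14 o13 o12 !addr0.
set s := e4 + e3 + e2 + e1.
have Hr : r = 1 - s.
  rewrite /r J1 J2 J3 J4 /meet meet_cc // meet_cc // ?meet_cc //;
  by rewrite ?mulrDl ?mulrDr ?o41 ?o31 ?o21 ?o14 ?o13 ?o12 ?o42 ?o32 ?o24 ?o23 ?addr0.
have pr : prj r by rewrite Hr; exact: prjC.
have pp2 : prj (p - e2) by rewrite -(meet_sub hp pe2 e2p); apply: prj_meet => //; exact: prjC.
have qq3 : prj (q - e3) by rewrite -(meet_sub hq pe3 e3q); apply: prj_meet => //; exact: prjC.
have Hrp : rp = p - e2 - e1.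
  rewrite /rp J3 J4 /meet meet_sub // meet_sub //.
  by rewrite mulrBr e1_p o12 subr0.
have Hrq : rq = q - e3 - e1.
  rewrite /rq J2 J4 /meet meet_sub // meet_sub //.
  by rewrite mulrBr e1_q o13 subr0.
have Hpr : p * r = p - e2 - e1.
  by rewrite Hr mulrBr mulr1 /s !mulrDr p_e4 p_e3 p_e2 p_e1 !add0r opprD addrA.
have Hrp' : r * p = p - e2 - e1.
  by rewrite Hr mulrBl mul1r /s !mulrDl e4_p e3_p e2_p e1_p !add0r opprD addrA.
have Hqr : q * r = q - e3 - e1.
  by rewrite Hr mulrBr mulr1 /s !mulrDr q_e4 q_e3 q_e2 q_e1 add0r addr0 opprD addrA.
have Hrq' : r * q = q - e3 - e1.
  by rewrite Hr mulrBl mul1r /s !mulrDl e4_q e3_q e2_q e1_q add0r addr0 opprD addrA.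
have prA : p - e2 - e1 \in A.
  by apply: inA_sub; [apply: inA_sub; [case: hp|case: pe2]|case: pe1].
have qrA : q - e3 - e1 \in A.
  by apply: inA_sub; [apply: inA_sub; [case: hq|case: pe3]|case: pe1].
have cpr : p * r = r * p by rewrite Hpr Hrp'.
have cqr : q * r = r * q by rewrite Hqr Hrq'.
have prp : prj rp by rewrite Hrp -Hpr; apply: prj_comm => //; rewrite Hpr.
have prq : prj rq by rewrite Hrq -Hqr; apply: prj_comm => //; rewrite Hqr.
split.
  split; first by rewrite Hrp Hpr.
  split=> //; rewrite /meet meet_comm //; by rewrite Hrp'.
split.
  split; first by rewrite Hrq Hqr.
  split=> //; rewrite /meet meet_comm //; by rewrite Hrq'.
have rrp : rp = p * r by rewrite Hrp Hpr.
have rrq : rq = q * r by rewrite Hrq Hqr.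
split.
  split; split=> //; apply/sleP => //.
  - by rewrite rrp -mulrA pr.2.
  - by rewrite rrq -mulrA pr.2.
have Er : forall e, s * e = e -> r * e = 0.
  by move=> e He; rewrite Hr mulrBl mul1r He subrr.
have sr1 : r * e1 = 0.
  by apply: Er; rewrite /s !mulrDl o41 o31 o21 pe1.2 !add0r.
have sr2 : r * e2 = 0.
  by apply: Er; rewrite /s !mulrDl o42 o32 pe2.2 o12 add0r add0r addr0.
have sr3 : r * e3 = 0.
  by apply: Er; rewrite /s !mulrDl o43 pe3.2 o23 o13 add0r addr0 addr0.
have sr4 : r * e4 = 0.
  by apply: Er; rewrite /s !mulrDl pe4.2 o34 o24 o14 !addr0.
have c'pr : (1 - p) * r = r * (1 - p) by rewrite mulrBl mulrBr mul1r mulr1 cpr.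
have c'qr : (1 - q) * r = r * (1 - q) by rewrite mulrBl mulrBr mul1r mulr1 cqr.
have rrp' : r - rp = (1 - p) * r by rewrite rrp mulrBl mul1r.
have rrq' : r - rq = (1 - q) * r by rewrite rrq mulrBl mul1r.
have pA : p * r \in A by rewrite Hpr.
have qA : q * r \in A by rewrite Hqr.
have p'A : (1 - p) * r \in A.
  by rewrite -rrp'; apply: inA_sub; [case: pr|case: prp].
have q'A : (1 - q) * r \in A.
  by rewrite -rrq'; apply: inA_sub; [case: pr|case: prq].
rewrite /generic_in rrp' rrq' rrp rrq.
split; first exact: gen_meet.
split; first exact: gen_meet.
split; exact: gen_meet.
Qed.

End S.

Unset Implicit Arguments.

Theorem theorem6p4 (R : realType) (E : algType R) (A Pos : {pred E})
  (HA : synaptic A Pos) (p q : E) (hp : proj A p) (hq : proj A q) :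
  let meet := pmeet A Pos in
  let join := pjoin A Pos in
  let r := meet (meet (meet (join p q) (join p (pcompl q)))
                      (join (pcompl p) q)) (join (pcompl p) (pcompl q)) in
  let rp := meet (meet p (join (pcompl p) q)) (join (pcompl p) (pcompl q)) in
  let rq := meet (meet q (join p (pcompl q))) (join (pcompl p) (pcompl q)) in
  (rp = p * r /\ p * r = r * p /\ r * p = meet r p) /\
  (rq = q * r /\ q * r = r * q /\ r * q = meet r q) /\
  (Pint A Pos r rp /\ Pint A Pos r rq) /\
  generic_in A Pos r rp rq.
Proof. exact: (main HA hp hq). Qed.
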